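(* Let $k$ be an algebraically closed field of characteristic zero, $\mathfrak g$ a nonzero finite-dimensional nilpotent Lie algebra over $k$, and $(A,\cdot)$ an LR-structure on $\mathfrak g$ such that the commuting family $\{L(x):x\in A\}$ has a single weight $\alpha$ on $A$ and $\alpha\ne0$. Then $A$ is commutative (so $\mathfrak g$ is abelian, and the zero product is a complete LR-structure on $\mathfrak g$).
   Context: An LR-algebra is a vector space $A$ with a bilinear product $\cdot$ satisfying $x\cdot(y\cdot z)=y\cdot(x\cdot z)$ and $(x\cdot y)\cdot z=(x\cdot z)\cdot y$ for all $x,y,z\in A$. An LR-structure on a Lie algebra $\mathfrak g$ is an LR-algebra product on the underlying vector space of $\mathfrak g$ with $x\cdot y-y\cdot x=[x,y]$. $L(x)y=x\cdot y$. An LR-structure is complete if all right multiplications $y\mapsto y\cdot x$ are nilpotent. ''Single weight $\alpha$'' means that each $L(x)$ has only the eigenvalue $\alpha(L(x))$, where $\alpha$ is a linear form on the span of the $L(x)$. *)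

(* Defs.v *)
From HB Require Import structures.
From mathcomp Require Import all_boot all_order all_algebra.
Set Implicit Arguments. Unset Strict Implicit. Unset Printing Implicit Defensive.
Import GRing.Theory.
Local Open Scope ring_scope.

Definition bilinear (k : fieldType) (n : nat)
  (f : 'rV[k]_n -> 'rV[k]_n -> 'rV[k]_n) : Prop :=
  (forall (a : k) (x y z : 'rV[k]_n), f (a *: x + y) z = a *: f x z + f y z) /\
  (forall (a : k) (x y z : 'rV[k]_n), f z (a *: x + y) = a *: f z x + f z y).

Definition is_lie_bracket (k : fieldType) (n : nat)
  (br : 'rV[k]_n -> 'rV[k]_n -> 'rV[k]_n) : Prop :=
  bilinear br /\
  (forall x, br x x = 0) /\
  (forall x y z, br x (br y z) + br y (br z x) + br z (br x y) = 0).

(* The term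
   C^{m+1} = [g, C^m] is spanned by right-normed brackets
   [x_1, [x_2, ..., [x_m, y]...]], so C^{m+1} = 0 iff all of these vanish. *)
Definition lie_nilpotent (k : fieldType) (n : nat)
  (br : 'rV[k]_n -> 'rV[k]_n -> 'rV[k]_n) : Prop :=
  exists m : nat, forall (s : seq 'rV[k]_n) (y : 'rV[k]_n),
    size s = m -> foldr br y s = 0.

Definition is_LR_algebra (k : fieldType) (n : nat)
  (mul : 'rV[k]_n -> 'rV[k]_n -> 'rV[k]_n) : Prop :=
  bilinear mul /\
  (forall x y z, mul x (mul y z) = mul y (mul x z)) /\
  (forall x y z, mul (mul x y) z = mul (mul x z) y).

Definition is_LR_structure (k : fieldType) (n : nat)
  (br mul : 'rV[k]_n -> 'rV[k]_n -> 'rV[k]_n) : Prop :=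
  is_LR_algebra mul /\ (forall x y, mul x y - mul y x = br x y).

(* L(x) as a matrix acting on row vectors: v *m Lmx mul x = mul x v. *)
Definition Lmx (k : fieldType) (n : nat)
  (mul : 'rV[k]_n -> 'rV[k]_n -> 'rV[k]_n) (x : 'rV[k]_n) : 'M[k]_n :=
  lin1_mx (mul x).

(* Main.v *)
Require Import Defs.
From HB Require Import structures.
From mathcomp Require Import all_boot all_order all_algebra.
Import GRing.Theory.
Local Open Scope ring_scope.

Section Lin.
Variables (k : fieldType) (n : nat) (f : 'rV[k]_n -> 'rV[k]_n).
Hypothesis hf : forall (a : k) (x y : 'rV[k]_n), f (a *: x + y) = a *: f x + f y.
Definition fl := f.
Fact fl_lin : linear_for *:%R fl.
Proof. by move=> a u v; rewrite /fl hf. Qed.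
HB.instance Definition _ := GRing.isLinear.Build k 'rV[k]_n 'rV[k]_n *:%R fl fl_lin.
Lemma mul_lin1 u : u *m lin1_mx f = f u.
Proof. exact: (mul_rV_lin1 (fl : {linear _ -> _})) . Qed.
End Lin.

Theorem proposition2p5 (k : closedFieldType) (n : nat)
  (br mul : 'rV[k]_n -> 'rV[k]_n -> 'rV[k]_n) (alpha : 'M[k]_n -> k) :
  [pchar k] =i pred0 ->
  (0 < n)%N ->
  is_lie_bracket br ->
  lie_nilpotent br ->
  is_LR_structure br mul ->
  (* alpha is a linear form (on the span of the L(x), here extended to all matrices) *)
  (forall (a : k) (M N : 'M[k]_n), alpha (a *: M + N) = a * alpha M + alpha N) ->
  (* single weight: each L(x) has only the eigenvalue alpha(L(x)) *)
  (forall (x : 'rV[k]_n) (c : k), eigenvalue (Lmx mul x) c -> c = alpha (Lmx mul x)) ->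
  (* alpha is nonzero on span{L(x)} *)
  (exists x : 'rV[k]_n, alpha (Lmx mul x) != 0) ->
  (forall x y : 'rV[k]_n, mul x y = mul y x) /\
  (forall x y : 'rV[k]_n, br x y = 0).
Proof.
move=> _ _ _ _ [[[_ bil2] [lc rc]] hbr] _ sw [x0 hx0].
have hL : forall u, u *m Lmx mul x0 = mul x0 u.
  by move=> u; apply: mul_lin1 => a x y; apply: bil2.
have unitL : Lmx mul x0 \in unitmx.
  rewrite -row_free_unit -kermx_eq0.
  apply/negPn/negP => ev.
  have := sw x0 0; rewrite /eigenvalue /eigenspace.
  have -> : (0 : k)%:M = 0 :> 'M[k]_n by apply/matrixP=> i j; rewrite !mxE mul0rn.
  rewrite subr0 => /(_ ev) h.
  by rewrite -h eqxx in hx0.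
have surj : forall w, mul x0 (w *m invmx (Lmx mul x0)) = w.
  by move=> w; rewrite -hL mulmxKV.
have inj : forall u v, mul x0 u = mul x0 v -> u = v.
  move=> u v; rewrite -!hL => /(congr1 (mulmx^~ (invmx (Lmx mul x0)))).
  by rewrite !mulmxK.
have assoc : forall z w y, mul (mul z w) y = mul z (mul w y).
  move=> z w y; rewrite -(surj w); set w' := _ *m _.
  by rewrite lc rc -lc rc.
have comm : forall y z, mul y z = mul z y.
  by move=> y z; apply: inj; rewrite -assoc rc assoc.
split=> // x y; by rewrite -hbr comm subrr.
Qed.
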